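(* Let $\mathcal A_1=(A,\to_{\mathcal A_1})$ and $\mathcal A_2=(A,\to_{\mathcal A_2})$ be ARSs on the same set $A$ and $\sim$ an equivalence relation on $A$. Suppose $\mathrm{NF}(\mathcal A_2)\subseteq\mathrm{NF}(\mathcal A_1)$ and $\to_{\mathcal A_2}\subseteq(\sim\cdot\to_{\mathcal A_1}\cdot\sim)^+$. If $\mathcal A_1$ is complete modulo $\sim$, then $\mathcal A_2$ is complete modulo $\sim$ and normalization equivalent modulo $\sim$ to $\mathcal A_1$.
   Context: $\mathrm{NF}(\mathcal A)$ is the set of normal forms of $\mathcal A$. $a\to^!_{\mathcal A}b$ means $a\to^*_{\mathcal A}b$ and $b\in\mathrm{NF}(\mathcal A)$. $\mathcal A$ is terminating modulo $\sim$ if $\sim\cdot\to_{\mathcal A}\cdot\sim$ admits no infinite sequence; Church–Rosser modulo $\sim$ if $(\leftarrow_{\mathcal A}\cup\to_{\mathcal A}\cup\sim)^*\subseteq\to^*_{\mathcal A}\cdot\sim\cdot\leftarrow^*_{\mathcal A}$; complete modulo $\sim$ if both. Normalization equivalent modulo $\sim$: $\to^!_{\mathcal A_1}\cdot\sim\;=\;\to^!_{\mathcal A_2}\cdot\sim$. *)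

(* Defs.v *)
From Stdlib Require Import Relations.

Set Implicit Arguments.

Definition rcomp {A : Type} (R S : relation A) : relation A :=
  fun a c => exists b, R a b /\ S b c.

Definition rinv {A : Type} (R : relation A) : relation A := fun a b => R b a.

Definition runion {A : Type} (R S : relation A) : relation A :=
  fun a b => R a b \/ S a b.

Definition rincl {A : Type} (R S : relation A) : Prop :=
  forall a b, R a b -> S a b.

Definition NF {A : Type} (R : relation A) (a : A) : Prop := ~ exists b, R a b.

Definition normalizes {A : Type} (R : relation A) (a b : A) : Prop :=
  clos_refl_trans A R a b /\ NF R b.

Definition rel_mod {A : Type} (R E : relation A) : relation A :=
  rcomp E (rcomp R E).

Definition terminating_mod {A : Type} (R E : relation A) : Prop :=
  ~ exists f : nat -> A, forall n, rel_mod R E (f n) (f (S n)).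

Definition CR_mod {A : Type} (R E : relation A) : Prop :=
  rincl (clos_refl_trans A (runion (rinv R) (runion R E)))
        (rcomp (clos_refl_trans A R) (rcomp E (rinv (clos_refl_trans A R)))).

Definition complete_mod {A : Type} (R E : relation A) : Prop :=
  terminating_mod R E /\ CR_mod R E.

Definition NE_mod {A : Type} (R1 R2 E : relation A) : Prop :=
  forall a b, rcomp (normalizes R1) E a b <-> rcomp (normalizes R2) E a b.

(* Main.v *)
Require Import Defs.
From Stdlib Require Import Relations Classical ClassicalEpsilon Wellfounded.

Section Aux.
Variable A : Type.

Lemma term_wf (T : relation A) :
  (~ exists f : nat -> A, forall n, T (f n) (f (S n))) ->
  well_founded (fun y x => T x y).
Proof.
  intros H x. apply NNPP; intro Hx. apply H.
  set (Q := fun z => ~ Acc (fun y x => T x y) z).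
  assert (step : forall z : {z | Q z}, {y : {z | Q z} | T (proj1_sig z) (proj1_sig y)}).
  { intros [z Hz]. 
    assert (exists y, T z y /\ Q y) as He.
    { apply NNPP; intro N. apply Hz. constructor. intros y Ty.
      apply NNPP; intro Ny. apply N. exists y. split; assumption. }
    destruct (constructive_indefinite_description _ He) as [y [Ty Qy]].
    exists (exist _ y Qy). exact Ty. }
  exists (fun n => proj1_sig (Nat.iter n (fun s => proj1_sig (step s)) (exist Q x Hx))).
  intro n. simpl. exact (proj2_sig (step _)).
Qed.

Lemma wf_term (T : relation A) :
  well_founded (fun y x => T x y) ->
  ~ exists f : nat -> A, forall n, T (f n) (f (S n)).
Proof.
  intros W [f Hf].
  assert (forall x, Acc (fun y x => T x y) x -> forall n, x <> f n).
  { intros x Ax. induction Ax as [x _ IH]. intros n e. subst.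
    apply (IH (f (S n)) (Hf n) (S n)). reflexivity. }
  exact (H (f 0) (W _) 0 eq_refl).
Qed.

Lemma nf_exists (R : relation A) :
  well_founded (fun y x => R x y) -> forall a, exists n, normalizes R a n.
Proof.
  intros W a. induction (W a) as [a _ IH].
  destruct (classic (NF R a)) as [H|H].
  - exists a. split; [apply rt_refl|exact H].
  - apply NNPP in H. destruct H as [b Hb]. destruct (IH b Hb) as [n [H1 H2]].
    exists n. split; [|exact H2]. eapply rt_trans; [apply rt_step; exact Hb|exact H1].
Qed.

Lemma nf_rt (R : relation A) x y : NF R x -> clos_refl_trans A R x y -> x = y.
Proof.
  intros N H. apply clos_rt_rt1n in H. destruct H; [reflexivity|].
  exfalso; apply N; eauto.
Qed.
End Aux.

Theorem lemma6p4 (A : Type) (R1 R2 E : relation A) :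
  equivalence A E ->
  (forall a, NF R2 a -> NF R1 a) ->
  rincl R2 (clos_trans A (rel_mod R1 E)) ->
  complete_mod R1 E ->
  complete_mod R2 E /\ NE_mod R1 R2 E.
Proof.
  intros [Er Et Es] Hnf Hinc [T1 C1].
  set (T := rel_mod R1 E).
  set (conv := clos_refl_trans A (runion (rinv R1) (runion R1 E))).
  assert (convsym : forall a b, conv a b -> conv b a).
  { intros a b H. induction H.
    - destruct H as [H|[H|H]]; apply rt_step.
      + right; left; exact H.
      + left; exact H.
      + right; right; apply Es; exact H.
    - apply rt_refl.
    - eapply rt_trans; eauto. }
  assert (convE : forall a b, E a b -> conv a b).
  { intros; apply rt_step; right; right; auto. }
  assert (convR1 : forall a b, R1 a b -> conv a b).
  { intros; apply rt_step; right; left; auto. }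
  assert (convT : forall a b, clos_trans A T a b -> conv a b).
  { intros a b H. induction H.
    - destruct H as [x0 [Ex [w [Rw Ew]]]].
      eapply rt_trans; [apply convE; eauto|].
      eapply rt_trans; [apply convR1; eauto|apply convE; eauto].
    - eapply rt_trans; eauto. }
  assert (convR2s : forall a b, clos_refl_trans A R2 a b -> conv a b).
  { intros a b H. induction H.
    - apply convT, Hinc; auto.
    - apply rt_refl.
    - eapply rt_trans; eauto. }
  assert (convR1s : forall a b, clos_refl_trans A R1 a b -> conv a b).
  { intros a b H. induction H.
    - apply convR1; auto.
    - apply rt_refl.
    - eapply rt_trans; eauto. }
  assert (nfE : forall a b, NF R1 a -> NF R1 b -> conv a b -> E a b).
  { intros a b Na Nb H. destruct (C1 a b H) as [c [Hc [d [Ed Hd]]]].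
    apply nf_rt in Hc; auto. apply nf_rt in Hd; auto. subst; auto. }
  assert (W1 : well_founded (fun y x => T x y)) by (apply term_wf; exact T1).
  assert (W1p : well_founded (fun y x => clos_trans A T x y)).
  { intro x. assert (Hw := wf_clos_trans A _ W1 x).
    induction Hw as [x _ IH]. constructor. intros y Hy. apply IH.
    clear -Hy. induction Hy; [apply t_step; auto|eapply t_trans; eauto]. }
  assert (absL : forall a b c, E a b -> clos_trans A T b c -> clos_trans A T a c).
  { intros a b c Eab H. apply clos_trans_t1n in H. apply clos_t1n_trans.
    destruct H as [c H|c d H H'].
    - destruct H as [x [Ex Rx]]. apply t1n_step. exists x; split; eauto.
    - destruct H as [x [Ex Rx]]. apply Relation_Operators.t1n_trans with c; [exists x; split; eauto|exact H']. }
  assert (absR : forall a b c, clos_trans A T a b -> E b c -> clos_trans A T a c).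
  { intros a b c H Ebc. apply clos_trans_tn1 in H. apply clos_tn1_trans.
    destruct H as [b H|y b H H'].
    - destruct H as [x [Ex [w [Rw Ew]]]]. apply tn1_step. exists x; split; eauto.
      exists w; split; eauto.
    - destruct H as [x [Ex [w [Rw Ew]]]]. apply Relation_Operators.tn1_trans with y; [|exact H'].
      exists x; split; eauto. exists w; split; eauto. }
  assert (W2 : well_founded (fun y x => rel_mod R2 E x y)).
  { intro x. induction (W1p x) as [x _ IH]. constructor. intros y Hy. apply IH.
    destruct Hy as [u [Eu [v [Rv Ev]]]]. eauto. }
  assert (W2' : well_founded (fun y x => R2 x y)).
  { intro x. induction (W2 x) as [x _ IH]. constructor. intros y Hy. apply IH.
    exists x; split; auto. exists y; split; auto. }
  assert (W1' : well_founded (fun y x => R1 x y)).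
  { intro x. induction (W1 x) as [x _ IH]. constructor. intros y Hy. apply IH.
    exists x; split; auto. exists y; split; auto. }
  split; [split|].
  - apply wf_term; exact W2.
  - intros a b H.
    destruct (@nf_exists A R2 W2' a) as [na [Ha Na]].
    destruct (@nf_exists A R2 W2' b) as [nb [Hb Nb]].
    exists na; split; auto. exists nb; split; auto.
    apply nfE; auto.
    eapply rt_trans; [apply convsym, convR2s; eauto|].
    eapply rt_trans; [|apply convR2s; eauto].
    clear -H convE convR2s convsym. induction H.
    + destruct H as [H|[H|H]].
      * apply convsym, convR2s, rt_step; exact H.
      * apply convR2s, rt_step; exact H.
      * apply convE; exact H.
    + apply rt_refl.
    + eapply rt_trans; eauto.
  - intros a b; split.
    + intros [n1 [[H1 N1] Eb]].
      destruct (@nf_exists A R2 W2' a) as [n2 [H2 N2]].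
      exists n2; split; [split; auto|].
      apply Et with n1; auto. apply Es, nfE; auto.
      eapply rt_trans; [apply convsym, convR1s; eauto|apply convR2s; eauto].
    + intros [n2 [[H2 N2] Eb]].
      destruct (@nf_exists A R1 W1' a) as [n1 [H1 N1]].
      exists n1; split; [split; auto|].
      apply Et with n2; auto. apply nfE; auto.
      eapply rt_trans; [apply convsym, convR1s; eauto|apply convR2s; eauto].
Qed.
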